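(* Let $n\ge 2$ and let $f:\mathbb{R}^n\to\mathbb{R}^n$ be a Laplacian map. Then, for the system $\dot x=f(x)$, the $\alpha$-limit set and the $\omega$-limit set of any trajectory consist of equilibrium points.
   Context: A real $n\times n$ matrix $L=(l_{ij})$ is a Laplacian matrix if it is symmetric and $l_{ii}=-\sum_{j\neq i} l_{ij}$ for $i=1,\dots,n$. A map $f:\mathbb{R}^n\to\mathbb{R}^n$ of class $C^1$ is a Laplacian map if its Jacobian matrix $Jf(x)$ is a Laplacian matrix for every $x\in\mathbb{R}^n$. *)

(* Defs.v *)
From HB Require Import structures.
From mathcomp Require Import all_boot all_order all_algebra.
From mathcomp Require Import all_classical all_reals.
From mathcomp Require Import topology normedtype sequences derive.
Set Implicit Arguments. Unset Strict Implicit. Unset Printing Implicit Defensive.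
Import Order.TTheory GRing.Theory Num.Theory.
Import numFieldNormedType.Exports.
Local Open Scope classical_set_scope.
Local Open Scope ring_scope.

Definition laplacian_matrix (R : numDomainType) (n : nat) (L : 'M[R]_n) : Prop :=
  L^T = L /\ forall i : 'I_n, L i i = - \sum_(j < n | j != i) L i j.

(* Jacobian matrix Jf(x) with the usual convention (Jf x) i j = d f_i / d x_j.
   MathComp-Analysis' [jacobian] uses the row-vector convention
   ((jacobian f x) i j = d f_j / d x_i), hence the transpose. *)
Definition Jac (R : realType) (n : nat) (f : 'rV[R]_n -> 'rV[R]_n) (x : 'rV[R]_n)
  : 'M[R]_n := (jacobian f x)^T.

Definition C1 (R : realType) (n : nat) (f : 'rV[R]_n -> 'rV[R]_n) : Prop :=
  (forall x, differentiable f x) /\ continuous (fun x => jacobian f x).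

Definition laplacian_map (R : realType) (n : nat) (f : 'rV[R]_n -> 'rV[R]_n) : Prop :=
  C1 f /\ forall x, laplacian_matrix (Jac f x).

Definition solution_on (R : realType) (n : nat) (f : 'rV[R]_n -> 'rV[R]_n)
  (I : set R) (phi : R -> 'rV[R]_n) : Prop :=
  forall t, I t -> is_derive t (1 : R) phi (f (phi t)).

Definition omega_limit (R : realType) (n : nat) (phi : R -> 'rV[R]_n) : set 'rV[R]_n :=
  [set p | exists s : nat -> R, (s @ \oo --> +oo) /\ ((phi \o s) @ \oo --> p)].

Definition alpha_limit (R : realType) (n : nat) (phi : R -> 'rV[R]_n) : set 'rV[R]_n :=
  [set p | exists s : nat -> R, (s @ \oo --> -oo) /\ ((phi \o s) @ \oo --> p)].

(* Main.v *)
Require Import Defs.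
From HB Require Import structures.
From mathcomp Require Import all_boot all_order all_algebra.
From mathcomp Require Import all_classical all_reals.
From mathcomp Require Import topology normedtype sequences derive.
From mathcomp Require Import realfun measure lebesgue_measure lebesgue_integral ftc.
From mathcomp Require Import ring lra.
Import Order.TTheory GRing.Theory Num.Theory.
Import numFieldNormedType.Exports.
Local Open Scope classical_set_scope.
Local Open Scope ring_scope.
Set Implicit Arguments. Unset Strict Implicit. Unset Printing Implicit Defensive.

(* Proof idea: a symmetric Jacobian makes f a gradient;
   U(t) = int_0^1 f(s phi t) . phi t ds is monotone along trajectories with
   derivative |f(phi t)|^2, which forbids recurrence near a non-equilibrium. *)

Section Aux.
Variables (R : realType) (n : nat).
Notation V := 'rV[R]_n.

Definition dot (u v : V) : R := \sum_i u ord0 i * v ord0 i.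

Lemma is_derive_coord (u : R -> V) (x : R) (du : V) (i : 'I_n) :
  is_derive x 1 u du -> is_derive x (1:R) (fun t => u t ord0 i) (du ord0 i).
Proof.
move=> H; have dx : derivable u x 1 by case: H.
have := derive_mx dx; rewrite (@derive_val _ _ _ _ _ _ _ H) => E.
apply: DeriveDef; first by move/derivable_mxP: dx; apply.
by rewrite E mxE.
Qed.

Lemma is_derive_dot (u v : R -> V) (x : R) (du dv : V) :
  is_derive x 1 u du -> is_derive x 1 v dv ->
  is_derive x (1:R) (fun t => dot (u t) (v t)) (dot du (v x) + dot (u x) dv).
Proof.
move=> Hu Hv.
have E : (fun t => dot (u t) (v t)) = \sum_(i < n) (fun t => u t ord0 i * v t ord0 i).
  by apply/funext => t; rewrite /dot fct_sumE.
rewrite E.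
apply: is_derive_eq.
  apply: is_derive_sum => i.
  exact: (is_deriveM (is_derive_coord i Hu) (is_derive_coord i Hv)).
by rewrite /dot -big_split /=; apply: eq_bigr => i _; rewrite /GRing.scale /= addrC [_ * du _ _]mulrC.
Qed.

Lemma is_derive_compJ (F : V -> V) (g : R -> V) (x : R) (dg : V) :
  differentiable F (g x) -> is_derive x 1 g dg ->
  is_derive x (1:R) (fun t => F (g t)) (dg *m jacobian F (g x)).
Proof.
move=> dF Hg.
have dgx : differentiable g x by apply/derivable1_diffP; case: Hg.
have dc : differentiable (F \o g) x by apply: differentiable_comp.
apply: DeriveDef; first exact: diff_derivable.
rewrite (deriveE _ dc) (diff_comp dgx dF) /=.
rewrite -(deriveE _ dgx) (@derive_val _ _ _ _ _ _ _ Hg).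
by rewrite -deriveEjacobian // deriveE.
Qed.

Section Cont.
Variable T : topologicalType.

Lemma cont_sum (m : nat) (h : 'I_m -> T -> R) (x : T) :
  (forall i, {for x, continuous (h i)}) -> {for x, continuous (fun t => \sum_i h i t)}.
Proof.
move=> H.
have -> : (fun t => \sum_i h i t) = \sum_i h i by apply/funext => t; rewrite fct_sumE.
apply: (big_ind (fun g : T -> R => {for x, continuous g})) => //.
- exact: cst_continuous.
- by move=> g1 g2 c1 c2; apply: continuousD.
Qed.

Lemma contD' (a b : T -> R) (x : T) :
  {for x, continuous a} -> {for x, continuous b} -> {for x, continuous (fun t => a t + b t)}.
Proof. by move=> ca cb; exact: (continuousD ca cb). Qed.

Lemma contM' (a b : T -> R) (x : T) :
  {for x, continuous a} -> {for x, continuous b} -> {for x, continuous (fun t => a t * b t)}.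
Proof. by move=> ca cb; exact: (continuousM ca cb). Qed.

Lemma cont_comp' (a b : nat) (u : T -> V) (F : V -> 'M[R]_(a, b)) (x : T) :
  {for x, continuous u} -> {for u x, continuous F} -> {for x, continuous (fun t => F (u t))}.
Proof. by move=> cu cF; exact: (continuous_comp cu cF). Qed.

Lemma cont_coord (a b : nat) (M : T -> 'M[R]_(a, b)) (x : T) i j :
  {for x, continuous M} -> {for x, continuous (fun t => M t i j)}.
Proof.
move=> cM.
exact: (@continuous_comp _ _ _ M (fun N : 'M[R]_(a, b) => N i j) x cM (@coord_continuous R a b i j (M x))).
Qed.

Lemma cont_dot (u v : T -> V) (x : T) :
  {for x, continuous u} -> {for x, continuous v} ->
  {for x, continuous (fun t => dot (u t) (v t))}.
Proof.
move=> cu cv; apply: cont_sum => i.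
by apply: continuousM; apply: cont_coord.
Qed.

Lemma cont_dotmul (u v : T -> V) (M : T -> 'M[R]_n) (x : T) :
  {for x, continuous u} -> {for x, continuous v} -> {for x, continuous M} ->
  {for x, continuous (fun t => dot (u t *m M t) (v t))}.
Proof.
move=> cu cv cM; apply: cont_sum => j.
apply: continuousM; last exact: cont_coord.
have -> : (fun t => (u t *m M t) ord0 j) = (fun t => \sum_i u t ord0 i * M t i j).
  by apply/funext => t; rewrite mxE.
apply: cont_sum => i.
by apply: continuousM; apply: cont_coord.
Qed.
End Cont.

Lemma coord_le (a b : nat) (M : 'M[R]_(a, b)) i j : `|M i j| <= `|M|.
Proof.
rewrite [leRHS]/Num.Def.normr/= mx_normrE.
apply: le_trans; last exact: (le_bigmax _ _ (i, j)).
by [].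
Qed.

Lemma dot_bound (u v : V) (A B : R) :
  (forall i, `|u ord0 i| <= A) -> (forall i, `|v ord0 i| <= B) ->
  `|dot u v| <= n%:R * (A * B).
Proof.
move=> hu hv; rewrite /dot.
apply: le_trans (ler_norm_sum _ _ _) _.
have -> : n%:R * (A * B) = \sum_(i < n) (A * B).
  by rewrite sumr_const card_ord mulr_natl.
apply: ler_sum => i _; rewrite normrM.
apply: ler_pM => //; exact: (le_trans (normr_ge0 _) (hu i)) || exact: hu.
Qed.

Lemma mul_coord_bound (u : V) (M : 'M[R]_n) j :
  `|(u *m M) ord0 j| <= n%:R * (`|u| * `|M|).
Proof.
rewrite mxE.
apply: le_trans (ler_norm_sum _ _ _) _.
have -> : n%:R * (`|u| * `|M|) = \sum_(i < n) (`|u| * `|M|).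
  by rewrite sumr_const card_ord mulr_natl.
apply: ler_sum => i _; rewrite normrM.
by apply: ler_pM => //; apply: coord_le.
Qed.

Lemma dot_sym (u v : V) (M : 'M[R]_n) : M^T = M ->
  dot (u *m M) v = dot (v *m M) u.
Proof.
move=> HM; rewrite /dot.
under eq_bigr do rewrite mxE mulr_suml.
rewrite exchange_big /=.
apply: eq_bigr => i _; rewrite mxE mulr_suml; apply: eq_bigr => j _.
have -> : M i j = M j i by rewrite -{1}HM mxE.

ring.
Qed.

Lemma dotZl (a : R) (u v : V) : dot (a *: u) v = a * dot u v.
Proof. by rewrite /dot mulr_sumr; apply: eq_bigr => i _; rewrite mxE mulrA. Qed.

Lemma dotZr (a : R) (u v : V) : dot u (a *: v) = a * dot u v.
Proof. by rewrite /dot mulr_sumr; apply: eq_bigr => i _; rewrite mxE mulrCA. Qed.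

Lemma dot_ge0 (u : V) : 0 <= dot u u.
Proof. by apply: sumr_ge0 => i _; rewrite -expr2 sqr_ge0. Qed.

Lemma mulmxZl (a : R) (u : V) (M : 'M[R]_n) : (a *: u) *m M = a *: (u *m M).
Proof. by rewrite scalemxAl. Qed.

Lemma ball_bound (a b : nat) (F : V -> 'M[R]_(a, b)) : continuous F ->
  forall rho : R, exists M : R, forall z : V, `|z| <= rho -> `|F z| <= M.
Proof.
move=> cF rho.
have [rho0|rho0] := ltP rho 0.
  by exists 0 => z hz; have := le_lt_trans (normr_ge0 z) (le_lt_trans hz rho0); rewrite ltxx.
pose A := closed_ball_ Num.norm (0 : V) rho.
have inA z : A z <-> `|z| <= rho by rewrite /A /closed_ball_ /= sub0r normrN.
have A0 : A !=set0 by exists 0; apply/inA; rewrite normr0.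
have Ac : compact A.
  apply: bounded_closed_compact; last exact: closed_closed_ball_.
  rewrite /= /bounded_near /=; near=> M => z /inA hz.
  apply: le_trans hz _; near: M; exact: nbhs_pinfty_ge (num_real _).
have cnF : {within A, continuous (fun z => `|F z|)}.
  apply: continuous_subspaceT => z.
  exact: (continuous_comp (cF z) (@norm_continuous _ _ _)).
have [c cA cmax] := EVT_max_rV A0 Ac cnF.
exists `|F c| => z hz; exact: (cmax z (mem_set (proj2 (inA z) hz))).
Unshelve. all: end_near.
Qed.

Lemma is_derive_scl (w : V) (y : R) : is_derive y (1:R) (fun s : R => s *: w) w.
Proof.
have [dif dE] := @is_diff_scalel R V y w.
apply: DeriveDef; first exact: diff_derivable.
by rewrite (deriveE _ dif) dE scale1r.
Qed.

Lemma dot0r (u : V) : dot u 0 = 0.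
Proof. by rewrite /dot big1 // => i _; rewrite mxE mulr0. Qed.

Lemma norm_le_coords (v : V) (B : R) : 0 <= B ->
  (forall i, `|v ord0 i| <= B) -> `|v| <= B.
Proof.
move=> B0 hv.
rewrite [leLHS]/Num.Def.normr/= mx_normrE (bigmax_le _ B0)//= => -[i j] _ /=.
by rewrite (ord1 i); exact: hv.
Qed.

Lemma dot_eq0 (u : V) : dot u u = 0 -> u = 0.
Proof.
move=> h; apply/matrixP => i j; rewrite (ord1 i) mxE.
have : forall k, true -> u ord0 k * u ord0 k = 0.
  by apply/psumr_eq0P => // k _; rewrite -expr2 sqr_ge0.
by move=> /(_ j isT) /eqP; rewrite mulf_eq0 orbb => /eqP.
Qed.

End Aux.


Section Main.
Variables (R : realType) (n : nat) (f : 'rV[R]_n -> 'rV[R]_n).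
Notation V := 'rV[R]_n.
Hypothesis Hd : forall x, differentiable f x.
Hypothesis Hc : continuous (fun x => jacobian f x).
Hypothesis Hs : forall x, (jacobian f x)^T = jacobian f x.

Lemma fcont : continuous f.
Proof. by move=> x; apply: differentiable_continuous. Qed.

Lemma scl_cont (w : V) : continuous (fun s : R => s *: w).
Proof. by move=> s; apply: differentiable_continuous; apply/derivable1_diffP; case: (is_derive_scl w s). Qed.

Definition hh (p w : V) (y : R) := y * dot (f (y *: p)) w.
Definition hd (p w : V) (y : R) := y * dot (p *m jacobian f (y *: p)) w + dot (f (y *: p)) w.

Lemma hh_derive (p w : V) (y : R) : is_derive y (1:R) (hh p w) (hd p w y).
Proof.
have H1 : is_derive y (1:R) (fun s => f (s *: p)) (p *m jacobian f (y *: p)).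
  exact: (is_derive_compJ (Hd _) (is_derive_scl p y)).
have H2 := is_derive_dot H1 (is_derive_cst w y 1).
have H3 := is_deriveM (is_derive_id y (1:R)) H2.
have -> : hh p w = (id * (fun t => dot (f (t *: p)) w))%R by apply/funext.
apply: is_derive_eq H3 _.
by rewrite /hd dot0r addr0 /GRing.scale /= mulr1.
Qed.

Lemma hd_cont (p w : V) : continuous (hd p w).
Proof.
move=> y; rewrite /hd.
apply: (@contD' R R (fun y0 : R => y0 * dot (p *m 'J f (y0 *: p)) w) (fun y0 => dot (f (y0 *: p)) w) y).
  apply: contM'; first exact: cvg_id.
  apply: cont_dotmul; [exact: cst_continuous | exact: cst_continuous |].
  exact: (@cont_comp' R n R n n (fun t => t *: p) (jacobian f) y (@scl_cont p y) (@Hc (y *: p))).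
apply: cont_dot; last exact: cst_continuous.
exact: (@cont_comp' R n R 1 n (fun t => t *: p) f y (@scl_cont p y) (@fcont (y *: p))).
Qed.

Section Traj.
Variables (c : R) (phi : R -> V) (t0 : R).
Hypothesis Hphi : forall t, t0 < t -> is_derive t (1:R) phi (c *: f (phi t)).

Definition gg (t y : R) := dot (f (y *: phi t)) (phi t).
Definition UU (t : R) := \int[lebesgue_measure]_(y in `[0, 1]) gg t y.
Definition DD (x y : R) := dot ((y *: (c *: f (phi x))) *m jacobian f (y *: phi x)) (phi x)
   + dot (f (y *: phi x)) (c *: f (phi x)).

Lemma gg_derive (x y : R) : t0 < x -> is_derive x (1:R) (gg ^~ y) (DD x y).
Proof.
move=> hx; have Hp := Hphi hx.
have H1 : is_derive x (1:R) (fun t => y *: phi t) (y *: (c *: f (phi x))).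
  exact: (is_deriveZ y Hp).
have H2 := is_derive_compJ (Hd _) H1.
exact: (is_derive_dot H2 Hp).
Qed.

Lemma DD_hd (t y : R) : DD t y = hd (phi t) (c *: f (phi t)) y.
Proof.
rewrite /DD /hd; congr (_ + _).
by rewrite mulmxZl dotZl dot_sym.
Qed.

Lemma int_hd (p w : V) :
  \int[lebesgue_measure]_(y in `[0, 1]) hd p w y = dot (f p) w.
Proof.
have cd : {within `[0, 1], continuous (hd p w)}.
  by apply: continuous_subspaceT; exact: hd_cont.
have chh : continuous (hh p w).
  move=> y; apply: differentiable_continuous; apply/derivable1_diffP.
  by case: (hh_derive p w y).
have dF : realfun.derivable_oo_LRcontinuous (hh p w) 0 1.
  split.
  - by move=> y _; case: (hh_derive p w y).
  - exact: cvg_at_right_filter (chh 0).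
  - exact: cvg_at_left_filter (chh 1).
have F'f : {in `]0, 1[, ((hh p w)^`())%classic =1 hd p w}.
  move=> y _; rewrite derive1E; exact: (@derive_val _ _ _ _ _ _ _ (hh_derive p w y)).
have := continuous_FTC2 ltr01 cd dF F'f.
rewrite /Rintegral => ->.
by rewrite -EFinB /= /hh mul0r subr0 mul1r scale1r.
Qed.

Lemma gg_cont (t : R) : continuous (gg t).
Proof.
move=> y; rewrite /gg.
apply: (@cont_dot R n R (fun y0 => f (y0 *: phi t)) (fun _ => phi t) y); last exact: cst_continuous.
exact: (@cont_comp' R n R 1 n (fun s => s *: phi t) f y (@scl_cont (phi t) y) (@fcont (y *: phi t))).
Qed.

Lemma UU_derive (t : R) : t0 < t ->
  is_derive t (1:R) UU (c * dot (f (phi t)) (f (phi t))).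
Proof.
move=> ht.
have cphi : {for t, continuous phi}.
  apply: differentiable_continuous; apply/derivable1_diffP; by case: (Hphi ht).
have /cvgrPdist_lt /(_ 1 ltr01) := cphi.
move=> /nbhs_ballP [d d0 Hball].
pose d' := Num.min d (t - t0).
have d'0 : 0 < d' by rewrite lt_min d0 subr_gt0 ht.
have d'd : d' <= d by rewrite /d' ge_min lexx.
have d't : d' <= t - t0 by rewrite /d' ge_min lexx orbT.
pose rho := `|phi t| + 1.
have inI x : `]t - d', t + d'[%classic x -> t0 < x /\ `|phi x| <= rho.
  rewrite /= in_itv /= => /andP[h1 h2].
  have hdx : `|t - x| < d.
    rewrite ltr_norml; apply/andP; split; lra.
  split; first lra.
  have := Hball x; rewrite -ball_normE /= => /(_ hdx) hx.
  rewrite /rho.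
  have -> : phi x = phi t - (phi t - phi x) by rewrite opprB addrC subrK.
  apply: le_trans (ler_normB _ _) _.
  by rewrite lerD2l ltW.
have [Mf Hf] := ball_bound fcont rho.
have [MJ HJ] := ball_bound Hc rho.
have rho0 : 0 <= rho by rewrite /rho addr_ge0.
have Mf0 : 0 <= Mf by apply: le_trans (Hf 0 _); rewrite ?normr0.
have MJ0 : 0 <= MJ by apply: le_trans (HJ 0 _); rewrite ?normr0.
pose K := n%:R * ((n%:R * ((`|c| * Mf) * MJ)) * rho) + n%:R * (Mf * (`|c| * Mf)).
have K0 : 0 <= K.
  by rewrite /K addr_ge0 // !mulr_ge0.
have Dbound x y : `]t - d', t + d'[%classic x -> `[0, 1]%classic y -> `|DD x y| <= K.
  move=> /inI [hx hpx]; rewrite /= in_itv /= => /andP[y0 y1].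
  have ny : `|y| <= 1 by rewrite ger0_norm.
  have hyp : `|y *: phi x| <= rho.
    rewrite normrZ; apply: le_trans hpx.
    by rewrite ler_piMl.
  have hfx : `|c *: f (phi x)| <= `|c| * Mf by rewrite normrZ ler_wpM2l // Hf.
  apply: le_trans (ler_normD _ _) _; apply: lerD.
    apply: dot_bound => i; last by apply: le_trans (coord_le _ _ _) hpx.
    apply: le_trans (mul_coord_bound _ _ _) _.
    rewrite ler_wpM2l //; apply: ler_pM => //.
    by rewrite normrZ; apply: le_trans hfx; rewrite ler_piMl.
    exact: HJ.
  apply: dot_bound => i.
    by apply: le_trans (coord_le _ _ _) (Hf _ hyp).
  exact: le_trans (coord_le _ _ _) hfx.
have Ia : `]t - d', t + d'[%classic t by rewrite /= in_itv /=; apply/andP; split; lra.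
have intf x : `]t - d', t + d'[%classic x ->
    (@lebesgue_measure R).-integrable `[0, 1] (EFin \o gg x).
  move=> _; apply: continuous_compact_integrable; first exact: segment_compact.
  by apply: continuous_subspaceT; exact: gg_cont.
have derf1 x y : `]t - d', t + d'[%classic x -> `[0, 1]%classic y -> derivable (gg ^~ y) x 1.
  by move=> /inI [hx _] _; case: (gg_derive y hx).
have G_ub x y : `]t - d', t + d'[%classic x -> `[0, 1]%classic y ->
    `|partial1of2 gg x y| <= cst K y.
  move=> hI hy; rewrite partial1of2E.
  have [hx _] := inI x hI.
  rewrite (@derive_val _ _ _ _ _ _ _ (gg_derive y hx)); exact: Dbound.
have intG : (@lebesgue_measure R).-integrable `[0, 1] (EFin \o cst K).
  apply: continuous_compact_integrable; first exact: segment_compact.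
  by apply: continuous_subspaceT => y; exact: cst_continuous.
have G_ge0 : forall y : R, 0 <= cst K y by move=> y; exact: K0.
have dU : derivable UU t 1.
  by apply: (derivable_under_integral _ Ia intf derf1 G_ge0 intG G_ub); exact: measurable_itv.
have eU : (UU^`())%classic t = \int[@lebesgue_measure R]_(y in `[0, 1]) ((partial1of2 gg)^~ y) t.
  by apply: (differentiation_under_integral _ Ia intf derf1 G_ge0 intG G_ub); exact: measurable_itv.
apply: DeriveDef; first exact: dU.
rewrite -derive1E eU.
transitivity (\int[@lebesgue_measure R]_(y in `[0, 1]) hd (phi t) (c *: f (phi t)) y); last first.
  by rewrite int_hd dotZr.
apply: eq_Rintegral => y _ /=; rewrite partial1of2E (@derive_val _ _ _ _ _ _ _ (gg_derive y ht)).
exact: DD_hd.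
Qed.

Hypothesis Hcpm : c = 1 \/ c = -1.

Lemma cc1 : c * c = 1.
Proof. by case: Hcpm => ->; rewrite ?mulr1 ?mulrNN ?mulr1. Qed.

Lemma normc1 : `|c| = 1.
Proof. by case: Hcpm => ->; rewrite ?normrN normr1. Qed.

Definition WW (t : R) := c * UU t.

Lemma WW_derive (t : R) : t0 < t -> is_derive t (1:R) WW (dot (f (phi t)) (f (phi t))).
Proof.
move=> ht.
have H : is_derive t (1:R) WW (c *: (c * dot (f (phi t)) (f (phi t)))) :=
  is_deriveZ c (UU_derive ht).
apply: is_derive_eq H _.
by rewrite /GRing.scale /= mulrA cc1 mul1r.
Qed.

Lemma WW_cont (t : R) : t0 < t -> {for t, continuous WW}.
Proof.
move=> ht; apply: differentiable_continuous; apply/derivable1_diffP; by case: (WW_derive ht).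
Qed.

Lemma WW_mono (a b : R) : t0 < a -> a <= b -> WW a <= WW b.
Proof.
move=> ha ab.
have dW x : x \in `[a, b] -> derivable WW x 1.
  by rewrite in_itv /= => /andP[h1 _]; case: (WW_derive (lt_le_trans ha h1)).
apply: (@ger0_derive1_ndecr _ WW a b) => //.
- by move=> x hx; apply: dW; apply: subset_itv_oo_cc.
- move=> x; rewrite in_itv /= => /andP[h1 _].
  have hx : t0 < x by apply: lt_trans ha h1.
  by rewrite derive1E (@derive_val _ _ _ _ _ _ _ (WW_derive hx)); exact: dot_ge0.
- exact: derivable_within_continuous.
Qed.

Lemma WW_incr (a b m : R) : t0 < a -> a < b ->
  (forall x, a < x -> x < b -> m <= dot (f (phi x)) (f (phi x))) ->
  WW a + m * (b - a) <= WW b.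
Proof.
move=> ha ab hm.
have dW x : x \in `[a, b] -> derivable WW x 1.
  by rewrite in_itv /= => /andP[h1 _]; case: (WW_derive (lt_le_trans ha h1)).
have der x : x \in `]a, b[ -> is_derive x (1:R) WW (dot (f (phi x)) (f (phi x))).
  rewrite in_itv /= => /andP[h1 _]; exact: WW_derive (lt_trans ha h1).
have [xi hxi E] := MVT ab der (derivable_within_continuous dW).
move: hxi; rewrite in_itv /= => /andP[h1 h2].
have := hm _ h1 h2 => hmx.
have : m * (b - a) <= dot (f (phi xi)) (f (phi xi)) * (b - a).
  by rewrite ler_wpM2r // subr_ge0 ltW.
lra.
Qed.



Lemma WW_bound (rho : R) : exists B : R, forall t, `|phi t| <= rho -> `|WW t| <= B.
Proof.
have [Mf Hf] := ball_bound fcont rho.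
pose K' := n%:R * (Mf * rho).
exists (K' * fine ((@lebesgue_measure R) `[0, 1]%classic)) => t hpt.
have mB : measurable (`[0, 1]%classic : set R) := measurable_itv _.
have int1 : (@lebesgue_measure R).-integrable `[0, 1] (EFin \o gg t).
  apply: continuous_compact_integrable; first exact: segment_compact.
  by apply: continuous_subspaceT; exact: gg_cont.
have int2 : (@lebesgue_measure R).-integrable `[0, 1] (EFin \o (fun y => `|gg t y|)).
  apply: continuous_compact_integrable; first exact: segment_compact.
  apply: continuous_subspaceT => y.
  exact: (continuous_comp (@gg_cont t y) (@norm_continuous _ _ _)).
have int3 : (@lebesgue_measure R).-integrable `[0, 1] (EFin \o (fun _ : R => K')).
  apply: continuous_compact_integrable; first exact: segment_compact.
  by apply: continuous_subspaceT => y; exact: cst_continuous.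
rewrite /WW normrM normc1 mul1r /UU.
apply: le_trans (le_normr_Rintegral _ int1) _; first exact: measurable_itv.
have E : \int[@lebesgue_measure R]_(y in `[0, 1]) K' = K' * fine ((@lebesgue_measure R) `[0, 1]%classic).
  by rewrite Rintegral_cst //; exact: measurable_itv.
rewrite -E.
apply: (le_Rintegral _ int2 int3); first exact: measurable_itv.
move=> y; rewrite /= in_itv /= => /andP[y0 y1].
have hyp : `|y *: phi t| <= rho.
  by rewrite normrZ; apply: le_trans hpt; rewrite ler_piMl // ger0_norm.
apply: dot_bound => i.
  exact: le_trans (coord_le _ _ _) (Hf _ hyp).
exact: le_trans (coord_le _ _ _) hpt.
Qed.

Lemma coord_move (a b Mb : R) : t0 < a -> a <= b -> 0 <= Mb ->
  (forall x, a < x -> x < b -> `|f (phi x)| <= Mb) -> `|phi b - phi a| <= Mb * (b - a).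
Proof.
move=> ha; rewrite le_eqVlt => /orP[/eqP <- | ab] Mb0 hM.
  by rewrite !subrr normr0 mulr0.
apply: norm_le_coords; first by rewrite mulr_ge0 // subr_ge0 ltW.
move=> i.
have der x : x \in `]a, b[ -> is_derive x (1:R) (fun s => phi s ord0 i) ((c *: f (phi x)) ord0 i).
  rewrite in_itv /= => /andP[h1 _]; exact: is_derive_coord (Hphi (lt_trans ha h1)).
have dv x : x \in `[a, b] -> derivable (fun s => phi s ord0 i) x 1.
  rewrite in_itv /= => /andP[h1 _].
  by case: (is_derive_coord i (Hphi (lt_le_trans ha h1))).
have [xi hxi E] := MVT ab der (derivable_within_continuous dv).
move: hxi; rewrite in_itv /= => /andP[h1 h2].
have bpos : 0 <= b - a by rewrite subr_ge0 ltW.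
rewrite !mxE E normrM (ger0_norm bpos).
apply: ler_wpM2r; first exact: bpos.
rewrite mxE normrM normc1 mul1r.
exact: le_trans (coord_le _ _ _) (hM _ h1 h2).
Qed.

Lemma phi_cont (t : R) : t0 < t -> {for t, continuous phi}.
Proof.
move=> ht; apply: differentiable_continuous; apply/derivable1_diffP; by case: (Hphi ht).
Qed.

Lemma stay (p : V) (r Mb a : R) : 0 < r -> 0 < Mb ->
  (forall z, `|z - p| < r -> `|f z| <= Mb) -> t0 < a -> `|phi a - p| < r / 2 ->
  forall u, a <= u -> u <= a + r / (4 * Mb) -> `|phi u - p| < r.
Proof.
move=> r0 Mb0 hM ha hpa.
have tau0 : 0 < r / (4 * Mb) by rewrite divr_gt0 // mulr_gt0.
have Mtau : Mb * (r / (4 * Mb)) = r / 4.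
  by field; rewrite gt_eqF.
set tau := r / (4 * Mb).
set b := a + tau.
pose S := [set s | a <= s /\ s <= b /\ forall u, a <= u -> u <= s -> `|phi u - p| < r].
have Sa : S a.
  split; first by []; split; first by rewrite /b lerDl ltW.
  move=> u h1 h2; have -> : u = a by apply/eqP; rewrite eq_le h1 h2.
  by apply: lt_trans hpa _; rewrite ltr_pdivrMr // ltr_pMr // ltr1n.
have S0 : S !=set0 by exists a.
have Sub : ubound S b by move=> s [_ []].
have hs : has_sup S by split => //; exists b.
set sg := sup S.
have sgub s : S s -> s <= sg by move=> Ss; exact: sup_upper_bound.
have asg : a <= sg by exact: sgub.
have sgb : sg <= b by exact: ge_sup.
have below u : a <= u -> u < sg -> `|phi u - p| < r.
  move=> h1 h2.
  have e0 : 0 < sg - u by rewrite subr_gt0.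
  have [s [_ [_ HS]] hs'] := sup_adherent e0 hs.
  apply: HS => //; move: hs'; rewrite /sg; lra.
have close u : a <= u -> u <= sg -> `|phi u - p| < 3 * r / 4.
  move=> h1 h2.
  have hm : `|phi u - phi a| <= r / 4.
    rewrite -Mtau; apply: le_trans (coord_move ha h1 (ltW Mb0) _) _.
      move=> x hx1 hx2; apply: hM; apply: below; [exact: ltW | exact: lt_le_trans hx2 h2].
    rewrite ler_pM2l // -/tau.
    have : u <= b by exact: le_trans h2 sgb.
    rewrite /b => hh; lra.
  apply: le_lt_trans (ler_distD (phi a) _ _) _.
  have : `|phi u - phi a| + `|phi a - p| < r / 4 + r / 2 by exact: ler_ltD.
  move=> h; apply: lt_le_trans h _; lra.
have bsg : b <= sg.
  rewrite leNgt; apply/negP => sgb'.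
  have hsg : t0 < sg by exact: lt_le_trans ha asg.
  have /cvgrPdist_lt /(_ (r / 4)) := phi_cont hsg.
  move=> /(_ (divr_gt0 r0 (ltr0n _ 4))) /nbhs_ballP [dl dl0 Hb].
  pose s' := Num.min (sg + dl / 2) b.
  have s'1 : s' <= sg + dl / 2 by rewrite /s' ge_min lexx.
  have s'2 : s' <= b by rewrite /s' ge_min lexx orbT.
  have s'3 : sg < s' by rewrite /s' lt_min sgb' andbT ltrDl divr_gt0.
  have : S s'.
    split; first exact: le_trans asg (ltW s'3).
    split; first exact: s'2.
    move=> u h1 h2.
    have [hu|hu] := leP u sg.
      by apply: lt_trans (close u h1 hu) _; lra.
    have hb : `|sg - u| < dl.
      rewrite ltr_norml; apply/andP; split; lra.
    have := Hb u; rewrite -ball_normE /= => /(_ hb) hb'.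
    apply: le_lt_trans (ler_distD (phi sg) _ _) _.
    have := close sg asg (lexx _) => hc.
    rewrite distrC in hb'.
    have : `|phi u - phi sg| + `|phi sg - p| < r / 4 + 3 * r / 4 by exact: ltrD.
    move=> h; apply: lt_le_trans h _; lra.
  move=> /sgub; lra.
move=> u h1 h2.
have [hu|hu] := leP u sg.
  by apply: lt_trans (close u h1 hu) _; lra.
move: h2; rewrite -/b; lra.
Qed.

Lemma omega_core (p : V) (s : nat -> R) :
  s @ \oo --> +oo -> (phi \o s) @ \oo --> p -> f p = 0.
Proof.
move=> Hsy Hcv.
have pick T eps : 0 < eps -> exists k, T <= s k /\ `|p - phi (s k)| < eps.
  move=> e0.
  have H1 := Hsy; move/cvgryPge: H1 => /(_ T) H1.
  have H2 := Hcv; move/cvgrPdist_lt: H2 => /(_ eps e0) H2.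
  have [k [hk1 hk2]] := filter_ex (filterI H1 H2).
  by exists k.
have [//|fp0] := eqVneq (f p) 0.
exfalso.
pose e := dot (f p) (f p).
have e0 : 0 < e.
  rewrite lt_def dot_ge0 andbT; apply/negP => /eqP /dot_eq0 h.
  by move: fp0; rewrite h eqxx.
have cq : {for p, continuous (fun z => dot (f z) (f z))}.
  exact: (@cont_dot R n _ f f p (@fcont p) (@fcont p)).
have /cvgrPdist_lt /(_ (e / 2) (divr_gt0 e0 (ltr0n _ 2))) Nq := cq.
have /cvgrPdist_lt /(_ 1 ltr01) Nf := @fcont p.
have [r r0 Hr] := (nbhs_ballP _ _).1 (filterI Nq Nf).
pose Mb := `|f p| + 1.
have Mb0 : 0 < Mb by rewrite /Mb ltr_wpDl.
have hM z : `|z - p| < r -> `|f z| <= Mb.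
  move=> hz; have hb : ball p r z by rewrite -ball_normE /= distrC.
  have [_ h2] := Hr z hb.
  rewrite /Mb.
  have -> : f z = f p - (f p - f z) by rewrite opprB addrC subrK.
  apply: le_trans (ler_normB _ _) _.
  by rewrite lerD2l ltW.
have hq z : `|z - p| < r -> e / 2 <= dot (f z) (f z).
  move=> hz; have hb : ball p r z by rewrite -ball_normE /= distrC.
  have [h1 _] := Hr z hb.
  move: h1; rewrite -/e ltr_norml => /andP[_ h1].
  lra.
set tau := r / (4 * Mb).
have tau0 : 0 < tau by rewrite divr_gt0 // mulr_gt0.
pose dl := e / 2 * tau.
have dl0 : 0 < dl by rewrite mulr_gt0 // divr_gt0.
have incr a : t0 < a -> `|p - phi a| < r / 2 -> WW a + dl <= WW (a + tau).
  move=> ha hpa.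
  have hpa' : `|phi a - p| < r / 2 by rewrite distrC.
  have ab : a < a + tau by rewrite ltrDl.
  have hx x : a < x -> x < a + tau -> e / 2 <= dot (f (phi x)) (f (phi x)).
    move=> h1 h2; apply: hq.
    exact: (stay r0 Mb0 hM ha hpa' (ltW h1) (ltW h2)).
  have := WW_incr ha ab hx.
  by rewrite addrAC subrr add0r.
pose T0 := t0 + 1.
have claim m : exists t, T0 <= t /\ WW T0 + m%:R * dl <= WW t.
  elim: m => [|m [t [ht hW]]].
    by exists T0; rewrite mul0r addr0.
  have r20 : 0 < r / 2 by rewrite divr_gt0.
  have [k [hk1 hk2]] := pick t (r / 2) r20.
  have htk : t0 < t by move: ht; rewrite /T0; lra.
  have hsk : t0 < s k by lra.
  exists (s k + tau); split; first lra.
  have h1 := incr _ hsk hk2.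
  have h2 := WW_mono htk hk1.
  rewrite -natr1 mulrDl mul1r; lra.
have [B HB] := WW_bound (`|p| + 1).
pose m := (Num.trunc ((B - WW T0) / dl)).+1.
have [t [ht hW]] := claim m.
have [k [hk1 hk2]] := pick t 1 ltr01.
have htk : t0 < t by move: ht; rewrite /T0; lra.
have hpk : `|phi (s k)| <= `|p| + 1.
  have -> : phi (s k) = p - (p - phi (s k)) by rewrite opprB addrC subrK.
  apply: le_trans (ler_normB _ _) _.
  by rewrite lerD2l ltW.
have hB := HB _ hpk.
have hB' : WW (s k) <= B by apply: le_trans (ler_norm _) hB.
have hmono := WW_mono htk hk1.
have hm : B - WW T0 < m%:R * dl.
  by rewrite -ltr_pdivrMr //; exact: truncnS_gt.
lra.
Qed.

End Traj.
End Main.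

Unset Implicit Arguments.

Lemma is_derive_neg (R : realType) (n : nat) (phi : R -> 'rV[R]_n) (t : R) (d : 'rV[R]_n) :
  is_derive (- t) (1:R) phi d -> is_derive t (1:R) (fun s => phi (- s)) (- d).
Proof.
move=> H.
have dphi : differentiable phi (- t) by apply/derivable1_diffP; case: H.
have dN : differentiable (-%R : R -> R) t by [].
have dc : differentiable (phi \o -%R) t by apply: differentiable_comp.
apply: DeriveDef; first exact: diff_derivable.
rewrite (deriveE _ dc) (diff_comp dN dphi) /=.
have -> : 'd (-%R : R -> R) t 1 = - 1.
  by rewrite -deriveE // (@derive_val _ _ _ _ _ _ _ (is_deriveNid t (1:R))).
rewrite (linearN ('d phi (- t))) -(deriveE _ dphi).
by rewrite (@derive_val _ _ _ _ _ _ _ H).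
Qed.

Theorem lemma5p1 (R : realType) (n : nat) (f : 'rV[R]_n -> 'rV[R]_n) :
  (2 <= n)%N -> laplacian_map f ->
  (forall (phi : R -> 'rV[R]_n) (t0 : R),
      solution_on f `]t0, +oo[ phi ->
      forall p, omega_limit phi p -> f p = 0) /\
  (forall (phi : R -> 'rV[R]_n) (t0 : R),
      solution_on f `]-oo, t0[ phi ->
      forall p, alpha_limit phi p -> f p = 0).
Proof.
move=> _ [[Hd Hc] HL].
have Hs x : (jacobian f x)^T = jacobian f x.
  have [E _] := HL x; move: E; rewrite /Jac trmxK => E.
  by rewrite -E.
split.
- move=> phi t0 Hsol p [s [Hsy Hcv]].
  have Hphi : forall t, t0 < t -> is_derive t (1:R) phi (1 *: f (phi t)).
    move=> t ht; rewrite scale1r; apply: Hsol.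
    by rewrite /= in_itv /= ht.
  exact: (omega_core Hd Hc Hs Hphi (or_introl erefl) Hsy Hcv).
- move=> phi t0 Hsol p [s [Hsy Hcv]].
  pose psi := fun t : R => phi (- t).
  have Hpsi : forall t, - t0 < t -> is_derive t (1:R) psi ((-1) *: f (psi t)).
    move=> t ht; rewrite scaleN1r /psi.
    apply: is_derive_neg; apply: Hsol.
    by rewrite /= in_itv /= ltrNl.
  have Hsy' : (fun k => - s k) @ \oo --> +oo by apply/cvgNry.
  have Hcv' : (psi \o (fun k => - s k)) @ \oo --> p.
    have -> : psi \o (fun k => - s k) = phi \o s.
      by apply/funext => k; rewrite /psi /= opprK.
    exact: Hcv.
  exact: (omega_core Hd Hc Hs Hpsi (or_intror erefl) Hsy' Hcv').
Qed.
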